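(* Let $N\ge 4$ be even, $p<0$, and let $0\le r_1<\dots<r_N\le 1$ be distinct points. Define $\sigma\in S_N$ by $$\sigma(i)=\begin{cases}1 & i=1,\\ \frac N2-i+3 & i \text{ even},\ i\le \frac N2+1,\\ N-i+3 & i\text{ odd},\ 1<i\le\frac N2+1,\\ i-\frac N2 & i\text{ even},\ i>\frac N2+1,\\ i & i\text{ odd},\ i>\frac N2+1.\end{cases}$$ Let $\tau\in S_N$ be the cyclic shift $\tau(i)=i+1$ for $i\le N-1$, $\tau(N)=1$, and set $\sigma_k=\tau^k\circ\sigma$ for $k=1,\dots,N$. Then an optimal Hamiltonian cycle is among the cycles $h_k^*=h[\sigma_k]$, $k=1,\dots,N$; i.e. $\min_{k}E(h[\sigma_k])\le E(h)$ for every Hamiltonian cycle $h$ of $\mathcal K_N$.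
   Context: The points are the vertices of the complete graph $\mathcal K_N$. For $p\in\mathbb R$ the weight of the edge $\{r_i,r_j\}$ is $w_{ij}=|r_i-r_j|^p$, and the cost of a Hamiltonian cycle $h$ is $E(h)=\sum_{e\in h}w_e$. For $\sigma\in S_N$, $h[\sigma]$ denotes the Hamiltonian cycle with edges $\{r_{\sigma(i)},r_{\sigma(i+1)}\}$, $i=1,\dots,N$, with $\sigma(N+1):=\sigma(1)$. *)

(* Defs.v *)
(* real numbers with real exponent (Rpower). Vertices are
   indexed 1..N; points r : nat -> R (only r 1 .. r N matter). *)
From Stdlib Require Import Reals Lra Lia Arith List.
Open Scope R_scope.

Definition sum1 (N : nat) (f : nat -> R) : R :=
  fold_right Rplus 0 (map f (seq 1 N)).

Definition nxt (N i : nat) : nat := if Nat.eqb i N then 1%nat else S i.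

(* pi is a permutation of {1,..,N} (values outside 1..N are irrelevant) *)
Definition is_perm (N : nat) (pi : nat -> nat) : Prop :=
  (forall i, (1 <= i <= N)%nat -> (1 <= pi i <= N)%nat) /\
  (forall i j, (1 <= i <= N)%nat -> (1 <= j <= N)%nat -> pi i = pi j -> i = j).

Definition weight (r : nat -> R) (p : R) (i j : nat) : R :=
  Rpower (Rabs (r i - r j)) p.

(* E(h[sigma]) = sum_{i=1}^N w_{sigma(i) sigma(i+1)}, sigma(N+1) := sigma(1) *)
Definition cost (N : nat) (r : nat -> R) (p : R) (sigma : nat -> nat) : R :=
  sum1 N (fun i => weight r p (sigma i) (sigma (nxt N i))).

Definition sigma0 (N : nat) (i : nat) : nat :=
  if Nat.eqb i 1 then 1%nat
  else if Nat.leb i (N / 2 + 1) then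
    (if Nat.even i then (N / 2 + 3 - i)%nat else (N + 3 - i)%nat)
  else
    (if Nat.even i then (i - N / 2)%nat else i).

Definition tau (N : nat) (i : nat) : nat := nxt N i.

Definition sigma_k (N k : nat) (i : nat) : nat := Nat.iter k (tau N) (sigma0 N i).

(* Main.v *)
Require Import Defs.
From Stdlib Require Import Reals Arith.
From Stdlib Require Import Lra Lia List Permutation Classical.
Open Scope bool_scope.
Open Scope R_scope.

Definition lsum (l : list nat) (f : nat -> R) : R := fold_right Rplus 0 (map f l).

Lemma lsum_nil f : lsum nil f = 0. Proof. reflexivity. Qed.
Lemma lsum_cons x l f : lsum (x :: l) f = f x + lsum l f. Proof. reflexivity. Qed.

Lemma lsum_ext l f g : (forall x, In x l -> f x = g x) -> lsum l f = lsum l g.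
Proof.
  induction l as [|x l IH]; intros H; [reflexivity|].
  rewrite !lsum_cons, H by (left; auto). rewrite IH; auto. intros y Hy; apply H; right; auto.
Qed.

Lemma lsum_plus l f g : lsum l (fun x => f x + g x) = lsum l f + lsum l g.
Proof. induction l; [simpl; unfold lsum; simpl; lra|]. rewrite !lsum_cons, IHl. lra. Qed.

Lemma lsum_minus l f g : lsum l (fun x => f x - g x) = lsum l f - lsum l g.
Proof. induction l; [simpl; unfold lsum; simpl; lra|]. rewrite !lsum_cons, IHl. lra. Qed.

Lemma lsum_scal l c f : lsum l (fun x => c * f x) = c * lsum l f.
Proof. induction l; [unfold lsum; simpl; lra|]. rewrite !lsum_cons, IHl. lra. Qed.

Lemma lsum_le l f g : (forall x, In x l -> f x <= g x) -> lsum l f <= lsum l g.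
Proof.
  induction l as [|x l IH]; intros H; [unfold lsum; simpl; lra|].
  rewrite !lsum_cons. assert (f x <= g x) by (apply H; left; auto).
  assert (lsum l f <= lsum l g) by (apply IH; intros; apply H; right; auto). lra.
Qed.

Lemma lsum_swap l1 l2 F :
  lsum l1 (fun x => lsum l2 (fun y => F x y)) = lsum l2 (fun y => lsum l1 (fun x => F x y)).
Proof.
  induction l1 as [|x l1 IH].
  - unfold lsum at 1; simpl. symmetry. induction l2; [reflexivity|]. rewrite lsum_cons, <- IHl2.
    unfold lsum; simpl; lra.
  - rewrite lsum_cons, IH. rewrite <- lsum_plus. apply lsum_ext. intros. rewrite lsum_cons. reflexivity.
Qed.

Lemma lsum_app l1 l2 f : lsum (l1 ++ l2) f = lsum l1 f + lsum l2 f.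
Proof. induction l1; [unfold lsum; simpl; lra|]. simpl. rewrite !lsum_cons, IHl1. lra. Qed.

Lemma lsum_zero l f : (forall x, In x l -> f x = 0) -> lsum l f = 0.
Proof.
  intros H. transitivity (lsum l (fun _ => 0)). apply lsum_ext; auto.
  induction l; [reflexivity|]. rewrite lsum_cons, IHl. lra. intros; apply H; right; auto.
Qed.

Lemma lsum_map l g f : lsum (map g l) f = lsum l (fun x => f (g x)).
Proof. unfold lsum. rewrite map_map. reflexivity. Qed.

Lemma lsum_perm l l' f : Permutation l l' -> lsum l f = lsum l' f.
Proof.
  induction 1; unfold lsum in *; simpl in *; lra.
Qed.

Lemma lsum_const1 v m : lsum (seq v m) (fun _ => 1) = INR m.
Proof.
  revert v; induction m; intros v; [reflexivity|]. simpl seq. rewrite lsum_cons, IHm, S_INR. lra.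
Qed.

Lemma lsum_tele (H : nat -> R) v m :
  lsum (seq v m) (fun b => H b - H (S b)) = H v - H (v + m)%nat.
Proof.
  revert v; induction m; intros v.
  - rewrite Nat.add_0_r. unfold lsum; simpl; lra.
  - simpl seq. rewrite lsum_cons, IHm. replace (S v + m)%nat with (v + S m)%nat by lia. lra.
Qed.

Definition bi (b : bool) : R := if b then 1 else 0.

Lemma lsum_ind l g : lsum l (fun t => bi (g t)) = INR (length (filter g l)).
Proof.
  induction l as [|x l IH]; [reflexivity|]. rewrite lsum_cons, IH. unfold bi.
  cbn [filter]. destruct (g x); cbn [length]; [rewrite S_INR|]; lra.
Qed.

Lemma filter_le1 (g : nat -> bool) l : NoDup l ->
  (forall t1 t2, In t1 l -> In t2 l -> g t1 = true -> g t2 = true -> t1 = t2) ->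
  (length (filter g l) <= 1)%nat.
Proof.
  induction l as [|x l IH]; intros Hnd H; [simpl; lia|].
  inversion Hnd; subst. simpl. destruct (g x) eqn:E.
  - simpl. assert (filter g l = nil).
    { destruct (filter g l) eqn:F; auto. exfalso.
      assert (In n (filter g l)) by (rewrite F; left; auto).
      apply filter_In in H0. destruct H0. assert (n = x) by (apply H; [right; auto | left; auto | auto | auto]).
      subst; contradiction. }
    rewrite H0; simpl; lia.
  - apply IH; auto. intros; apply H; auto; right; auto.
Qed.

Lemma filter_nil_all (g : nat -> bool) l : length (filter g l) = 0%nat -> forall x, In x l -> g x = false.
Proof.
  intros H x Hx. destruct (g x) eqn:E; auto. exfalso.
  assert (In x (filter g l)) by (apply filter_In; auto). destruct (filter g l); simpl in *; [auto|lia].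
Qed.

Lemma perm_map N (s : nat -> nat) : is_perm N s -> Permutation (map s (seq 1 N)) (seq 1 N).
Proof.
  intros [Hr Hi]. apply Permutation_map_same_l.
  - apply FinFun.Injective_map_NoDup_in; [|apply seq_NoDup].
    intros x y Hx Hy. apply in_seq in Hx, Hy. apply Hi; lia.
  - intros y Hy. apply in_map_iff in Hy. destruct Hy as [x [<- Hx]]. apply in_seq in Hx.
    apply in_seq. specialize (Hr x ltac:(lia)). lia.
Qed.

Lemma sum_perm N (s : nat -> nat) g : is_perm N s -> sum1 N (fun t => g (s t)) = sum1 N g.
Proof.
  intros H. change (lsum (seq 1 N) (fun t => g (s t)) = lsum (seq 1 N) g).
  rewrite <- lsum_map. apply lsum_perm, perm_map, H.
Qed.

Lemma perm_surj N s v : is_perm N s -> (1 <= v <= N)%nat -> exists t, (1 <= t <= N)%nat /\ s t = v.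
Proof.
  intros H Hv. assert (In v (map s (seq 1 N))).
  { eapply Permutation_in. symmetry. apply perm_map, H. apply in_seq. lia. }
  apply in_map_iff in H0. destruct H0 as [t [E Ht]]. apply in_seq in Ht. exists t; split; auto; lia.
Qed.

Lemma nxt_range N i : (1 <= N)%nat -> (1 <= i <= N)%nat -> (1 <= nxt N i <= N)%nat.
Proof. intros. unfold nxt. destruct (Nat.eqb_spec i N); lia. Qed.

Lemma nxt_perm N : (1 <= N)%nat -> is_perm N (nxt N).
Proof.
  intros HN. split. intros; apply nxt_range; auto.
  intros i j Hi Hj. unfold nxt. destruct (Nat.eqb_spec i N), (Nat.eqb_spec j N); lia.
Qed.

Lemma comp_perm N s1 s2 : is_perm N s1 -> is_perm N s2 -> is_perm N (fun t => s1 (s2 t)).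
Proof.
  intros [R1 I1] [R2 I2]. split; intros. apply R1, R2; auto.
  apply I2; auto; apply I1; auto.
Qed.

Lemma rp_pos x p : 0 < Rpower x p.
Proof. unfold Rpower. apply exp_pos. Qed.

Lemma rp_dec x y p : p < 0 -> 0 < x -> x <= y -> Rpower y p <= Rpower x p.
Proof.
  intros hp hx hxy. destruct (Rle_lt_or_eq_dec _ _ hxy) as [Hl|He]; [|subst; lra].
  unfold Rpower. left. apply exp_increasing.
  assert (ln x < ln y) by (apply ln_increasing; auto). nra.
Qed.

Lemma rp_one p : Rpower 1 p = 1.
Proof. unfold Rpower. rewrite ln_1, Rmult_0_r, exp_0. reflexivity. Qed.

Lemma key4 d1 d3 dl p : p < 0 -> 0 < d1 -> d1 <= d3 -> 0 < dl ->
  Rpower d3 p - Rpower (d3 + dl) p <= Rpower d1 p - Rpower (d1 + dl) p.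
Proof.
  intros hp h1 h13 hd.
  set (s := d3 / d1).
  assert (hs : 1 <= s). { unfold s. apply (Rmult_le_reg_r d1); auto. field_simplify; lra. }
  assert (E3 : d3 = s * d1) by (unfold s; field; lra).
  assert (E4 : d3 + dl = s * (d1 + dl / s)) by (rewrite E3; field; lra).
  rewrite E4, E3. rewrite <- !Rpower_mult_distr by (try lra; apply Rplus_lt_0_compat; auto;
     apply Rdiv_lt_0_compat; lra).
  assert (Hsp : Rpower s p <= 1) by (rewrite <- (rp_one p); apply rp_dec; lra).
  assert (Hsp0 := rp_pos s p).
  assert (A1 : Rpower (d1 + dl) p <= Rpower (d1 + dl / s) p).
  { apply rp_dec; auto. apply Rplus_lt_0_compat; auto; apply Rdiv_lt_0_compat; lra.
    assert (dl / s <= dl). { apply (Rmult_le_reg_r s). lra. field_simplify; nra. } lra. }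
  assert (A2 : Rpower (d1 + dl / s) p <= Rpower d1 p).
  { apply rp_dec; auto. assert (0 < dl / s) by (apply Rdiv_lt_0_compat; lra). lra. }
  nra.
Qed.


Definition memI (a b x : nat) : bool := (a <=? x)%nat && (x <=? b)%nat.

Definition G (N : nat) (r : nat -> R) (p : R) (a b : nat) : R := if ((1 <=? a)%nat && (b <=? N)%nat) then weight r p a b else 0.

Definition om N r p (a b : nat) : R := G N r p a b - G N r p (a - 1) b - G N r p a (S b) + G N r p (a - 1) (S b).

Lemma seq_split N m : (m <= N)%nat -> seq 1 N = seq 1 m ++ seq (1 + m) (N - m).
Proof. intros. rewrite <- seq_app. f_equal. lia. Qed.

Lemma decomp N r p u v : (1 <= u)%nat -> (u < v)%nat -> (v <= N)%nat ->
  weight r p u v = lsum (seq 1 N) (fun a => lsum (seq 1 N) (fun b => om N r p a b * bi (memI a b u && memI a b v))).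
Proof.
  intros H1 H2 H3.
  assert (inner : forall a, (1 <= a <= N)%nat ->
     lsum (seq 1 N) (fun b => om N r p a b * bi (memI a b u && memI a b v)) =
     bi (a <=? u)%nat * (G N r p a v - G N r p (a-1) v)).
  { intros a Ha. rewrite (seq_split N (v - 1)) by lia. rewrite lsum_app.
    rewrite lsum_zero. 2:{ intros b Hb. apply in_seq in Hb. unfold memI.
      replace (v <=? b)%nat with false by (symmetry; apply Nat.leb_gt; lia).
      rewrite !Bool.andb_false_r. unfold bi; lra. }
    replace (1 + (v - 1))%nat with v by lia.
    transitivity (lsum (seq v (N - (v - 1))) (fun b => bi (a <=? u)%nat *
      ((G N r p a b - G N r p (a-1) b) - (G N r p a (S b) - G N r p (a-1) (S b))))).
    { rewrite Rplus_0_l. apply lsum_ext. intros b Hb. apply in_seq in Hb. unfold memI, om.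
      replace (u <=? b)%nat with true by (symmetry; apply Nat.leb_le; lia).
      replace (v <=? b)%nat with true by (symmetry; apply Nat.leb_le; lia).
      destruct (Nat.leb_spec a u).
      - replace (a <=? v)%nat with true by (symmetry; apply Nat.leb_le; lia). simpl. unfold bi; lra.
      - simpl. unfold bi. lra. }
    rewrite lsum_scal. rewrite (lsum_tele (fun b => G N r p a b - G N r p (a-1) b)).
    replace (v + (N - (v - 1)))%nat with (S N) by lia.
    unfold G at 3 4. replace (S N <=? N)%nat with false by (symmetry; apply Nat.leb_gt; lia).
    rewrite !Bool.andb_false_r. lra. }
  rewrite (lsum_ext _ _ (fun a => bi (a <=? u)%nat * (G N r p a v - G N r p (a-1) v))).
  2:{ intros a Ha. apply in_seq in Ha. apply inner. lia. }
  rewrite (seq_split N u) by lia. rewrite lsum_app.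
  rewrite (lsum_zero (seq (1+u) _)). 2:{ intros a Ha. apply in_seq in Ha.
     replace (a <=? u)%nat with false by (symmetry; apply Nat.leb_gt; lia). unfold bi; lra. }
  rewrite Rplus_0_r.
  transitivity (lsum (seq 1 u) (fun a => - ((fun a => G N r p (a - 1) v) a - (fun a => G N r p (a - 1) v) (S a)))).
  2:{ apply lsum_ext. intros a Ha. apply in_seq in Ha.
      replace (a <=? u)%nat with true by (symmetry; apply Nat.leb_le; lia). simpl.
      rewrite Nat.sub_0_r. unfold bi; lra. }
  rewrite <- (Rmult_1_l (lsum _ _)).
  rewrite (lsum_ext _ _ (fun a => (-1) * ((fun a => G N r p (a - 1) v) a - (fun a => G N r p (a - 1) v) (S a))))
    by (intros; lra).
  rewrite lsum_scal, lsum_tele. unfold G.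
  replace (1 + u - 1)%nat with u by lia. simpl (1 <=? 1 - 1)%nat.
  replace (1 <=? u)%nat with true by (symmetry; apply Nat.leb_le; lia).
  replace (v <=? N)%nat with true by (symmetry; apply Nat.leb_le; lia). simpl. lra.
Qed.

Lemma om_nonneg N r p a b : p < 0 ->
  (forall i j : nat, (1 <= i)%nat -> (i < j)%nat -> (j <= N)%nat -> r i < r j) ->
  (1 <= a)%nat -> (a < b)%nat -> (b <= N)%nat -> 0 <= om N r p a b.
Proof.
  intros hp hm H1 H2 H3. unfold om, G, weight.
  replace (1 <=? a)%nat with true by (symmetry; apply Nat.leb_le; lia).
  replace (b <=? N)%nat with true by (symmetry; apply Nat.leb_le; lia). cbn [andb].
  assert (Hab := hm a b H1 H2 H3).
  rewrite (Rabs_left (r a - r b)) by lra.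
  destruct (Nat.leb_spec 1 (a - 1)) as [Ha|Ha]; [replace (1 <=? a - 1)%nat with true by (symmetry; apply Nat.leb_le; lia)|replace (1 <=? a - 1)%nat with false by (symmetry; apply Nat.leb_gt; lia)];
  (destruct (Nat.leb_spec (S b) N) as [Hb|Hb]; [replace (S b <=? N)%nat with true by (symmetry; apply Nat.leb_le; lia)|replace (S b <=? N)%nat with false by (symmetry; apply Nat.leb_gt; lia)]); cbn [andb].
  - assert (E1 := hm (a-1)%nat a ltac:(lia) ltac:(lia) ltac:(lia)).
    assert (E2 := hm b (S b) ltac:(lia) ltac:(lia) ltac:(lia)).
    assert (E3 := hm (a-1)%nat b ltac:(lia) ltac:(lia) ltac:(lia)).
    assert (E4 := hm a (S b) ltac:(lia) ltac:(lia) ltac:(lia)).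
    rewrite (Rabs_left (r (a-1)%nat - r b)) by lra.
    rewrite (Rabs_left (r a - r (S b))) by lra.
    rewrite (Rabs_left (r (a-1)%nat - r (S b))) by lra.
    assert (K := key4 (r b - r a) (r (S b) - r a) (r a - r (a-1)%nat) p hp ltac:(lra) ltac:(lra) ltac:(lra)).
    replace (- (r (a - 1)%nat - r b)) with (r b - r a + (r a - r (a - 1)%nat)) by ring.
    replace (- (r (a - 1)%nat - r (S b))) with (r (S b) - r a + (r a - r (a - 1)%nat)) by ring.
    replace (- (r a - r (S b))) with (r (S b) - r a) by ring.
    replace (- (r a - r b)) with (r b - r a) by ring. lra.
  - assert (E3 := hm (a-1)%nat b ltac:(lia) ltac:(lia) ltac:(lia)).
    assert (E1 := hm (a-1)%nat a ltac:(lia) ltac:(lia) ltac:(lia)).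
    rewrite (Rabs_left (r (a-1)%nat - r b)) by lra.
    pose proof (rp_dec (- (r a - r b)) (- (r (a - 1)%nat - r b)) p hp ltac:(lra) ltac:(lra)). lra.
  - assert (E4 := hm a (S b) ltac:(lia) ltac:(lia) ltac:(lia)).
    assert (E2 := hm b (S b) ltac:(lia) ltac:(lia) ltac:(lia)).
    rewrite (Rabs_left (r a - r (S b))) by lra.
    pose proof (rp_dec (- (r a - r b)) (- (r a - r (S b))) p hp ltac:(lra) ltac:(lra)). lra.
  - assert (H := rp_pos (- (r a - r b)) p). lra.
Qed.

Definition inT N (s : nat -> nat) a b : R :=
  sum1 N (fun t => bi (memI a b (s t) && memI a b (s (nxt N t)))).
Definition outT N (s : nat -> nat) a b : R :=
  sum1 N (fun t => bi (negb (memI a b (s t)) && negb (memI a b (s (nxt N t))))).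

Lemma sum1_lsum N f : sum1 N f = lsum (seq 1 N) f. Proof. reflexivity. Qed.

Lemma weight_sym r p u v : weight r p u v = weight r p v u.
Proof. unfold weight. rewrite Rabs_minus_sym. reflexivity. Qed.

Lemma nxt_neq N t : (2 <= N)%nat -> (1 <= t <= N)%nat -> nxt N t <> t.
Proof. intros. unfold nxt. destruct (Nat.eqb_spec t N); lia. Qed.

Lemma cost_decomp N r p s : (2 <= N)%nat -> is_perm N s ->
  cost N r p s = lsum (seq 1 N) (fun a => lsum (seq 1 N) (fun b => om N r p a b * inT N s a b)).
Proof.
  intros HN Hs. unfold cost, inT, sum1. fold (lsum (seq 1 N) (fun i => weight r p (s i) (s (nxt N i)))).
  rewrite (lsum_ext _ _ (fun t => lsum (seq 1 N) (fun a => lsum (seq 1 N) (fun b =>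
      om N r p a b * bi (memI a b (s t) && memI a b (s (nxt N t))))))).
  2:{ intros t Ht. apply in_seq in Ht. destruct Hs as [Hr Hi].
      assert (Hu := Hr t ltac:(lia)). assert (Hn := nxt_range N t ltac:(lia) ltac:(lia)).
      assert (Hv := Hr _ Hn).
      assert (s t <> s (nxt N t)). { intro E. apply Hi in E; try lia. apply (nxt_neq N t); auto; lia. }
      destruct (Nat.lt_ge_cases (s t) (s (nxt N t))).
      - apply (decomp N r p); lia.
      - rewrite weight_sym, (decomp N r p) by lia. apply lsum_ext; intros; apply lsum_ext; intros.
        rewrite Bool.andb_comm. reflexivity. }
  rewrite lsum_swap. apply lsum_ext. intros a _. rewrite lsum_swap. apply lsum_ext. intros b _.
  rewrite lsum_scal. reflexivity.
Qed.

Lemma count_in N s a b : is_perm N s -> (1 <= a)%nat -> (a <= b)%nat -> (b <= N)%nat ->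
  sum1 N (fun t => bi (memI a b (s t))) = INR (b - a + 1).
Proof.
  intros Hs H1 H2 H3. rewrite (sum_perm N s (fun v => bi (memI a b v))) by auto.
  unfold sum1. fold (lsum (seq 1 N) (fun v => bi (memI a b v))).
  replace N with ((a - 1) + ((b - a + 1) + (N - b)))%nat at 1 by lia.
  remember (b - a + 1)%nat as m. rewrite !seq_app, !lsum_app.
  rewrite (lsum_zero (seq 1 (a-1))). 2:{ intros x Hx. apply in_seq in Hx. unfold memI.
     replace (a <=? x)%nat with false by (symmetry; apply Nat.leb_gt; lia). reflexivity. }
  rewrite (lsum_zero (seq (1 + (a - 1) + m) _)). 2:{ intros x Hx. apply in_seq in Hx. unfold memI.
     replace (x <=? b)%nat with false by (symmetry; apply Nat.leb_gt; lia). rewrite Bool.andb_false_r. reflexivity. }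
  rewrite (lsum_ext _ _ (fun _ => 1)). 2:{ intros x Hx. apply in_seq in Hx. unfold memI.
     replace (a <=? x)%nat with true by (symmetry; apply Nat.leb_le; lia).
     replace (x <=? b)%nat with true by (symmetry; apply Nat.leb_le; lia). reflexivity. }
  rewrite lsum_const1. lra.
Qed.

Lemma in_out N s a b : (1 <= N)%nat -> is_perm N s -> (1 <= a)%nat -> (a <= b)%nat -> (b <= N)%nat ->
  inT N s a b - outT N s a b = 2 * INR (b - a + 1) - INR N.
Proof.
  intros HN Hs H1 H2 H3. unfold inT, outT. rewrite !sum1_lsum.
  rewrite <- (lsum_minus (seq 1 N)).
  rewrite (lsum_ext _ _ (fun t => bi (memI a b (s t)) + bi (memI a b (s (nxt N t))) - 1)).
  2:{ intros t _. unfold bi. destruct (memI a b (s t)), (memI a b (s (nxt N t))); simpl; lra. }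
  rewrite lsum_minus, lsum_plus, lsum_const1.
  pose proof (count_in N s a b Hs H1 H2 H3) as C1.
  pose proof (count_in N (fun t => s (nxt N t)) a b (comp_perm N s (nxt N) Hs (nxt_perm N HN)) H1 H2 H3) as C2.
  rewrite sum1_lsum in C1, C2.
  rewrite C1, C2. lra.
Qed.

Lemma sum_bi_cases N g : sum1 N (fun t => bi (g t)) = 0 \/ 1 <= sum1 N (fun t => bi (g t)).
Proof.
  unfold sum1. fold (lsum (seq 1 N) (fun t => bi (g t))). rewrite lsum_ind.
  destruct (length (filter g (seq 1 N))); [left; reflexivity|right]. rewrite S_INR. pose proof (pos_INR n). lra.
Qed.

Lemma sum_bi_nonneg N g : 0 <= sum1 N (fun t => bi (g t)).
Proof. unfold sum1. fold (lsum (seq 1 N) (fun t => bi (g t))). rewrite lsum_ind. apply pos_INR. Qed.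

Lemma sum_bi_zero N g : sum1 N (fun t => bi (g t)) = 0 -> forall t, (1 <= t <= N)%nat -> g t = false.
Proof.
  unfold sum1. fold (lsum (seq 1 N) (fun t => bi (g t))). rewrite lsum_ind. intros H t Ht.
  apply (filter_nil_all g (seq 1 N)). apply INR_eq. simpl. exact H. apply in_seq; lia.
Qed.

Lemma sum_bi_all0 N g : (forall t, (1 <= t <= N)%nat -> g t = false) -> sum1 N (fun t => bi (g t)) = 0.
Proof.
  intros H. unfold sum1. fold (lsum (seq 1 N) (fun t => bi (g t))). apply lsum_zero.
  intros t Ht. apply in_seq in Ht. rewrite H by lia. reflexivity.
Qed.

Lemma sum_bi_le1 N g : (forall t1 t2, (1 <= t1 <= N)%nat -> (1 <= t2 <= N)%nat -> g t1 = true -> g t2 = true -> t1 = t2) ->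
  sum1 N (fun t => bi (g t)) <= 1.
Proof.
  intros H. unfold sum1. fold (lsum (seq 1 N) (fun t => bi (g t))). rewrite lsum_ind.
  assert (L := filter_le1 g (seq 1 N) (seq_NoDup _ _) ltac:(intros t1 t2 H1 H2; apply in_seq in H1, H2; apply H; lia)).
  apply le_INR in L. simpl in L. exact L.
Qed.

Lemma pair_le1 N s a b : (3 <= N)%nat -> is_perm N s -> a <> b ->
  (forall t, (1 <= t <= N)%nat -> memI a b (s t) && memI a b (s (nxt N t)) = true ->
      (s t = a /\ s (nxt N t) = b) \/ (s t = b /\ s (nxt N t) = a)) ->
  inT N s a b <= 1.
Proof.
  intros HN [Hr Hi] Hab H. apply sum_bi_le1. intros t1 t2 T1 T2 G1 G2.
  assert (N1 := nxt_range N t1 ltac:(lia) T1). assert (N2 := nxt_range N t2 ltac:(lia) T2).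
  destruct (H t1 T1 G1) as [[A1 B1]|[A1 B1]]; destruct (H t2 T2 G2) as [[A2 B2]|[A2 B2]].
  - apply Hi; auto; congruence.
  - assert (E1 : t1 = nxt N t2) by (apply Hi; auto; congruence).
    assert (E2 : t2 = nxt N t1) by (apply Hi; auto; congruence).
    exfalso. subst t1. unfold nxt in *. destruct (Nat.eqb_spec t2 N); destruct (Nat.eqb_spec (S t2) N); subst; try lia.
    destruct (Nat.eqb_spec 1 N); lia.
  - assert (E1 : t1 = nxt N t2) by (apply Hi; auto; congruence).
    assert (E2 : t2 = nxt N t1) by (apply Hi; auto; congruence).
    exfalso. subst t1. unfold nxt in *. destruct (Nat.eqb_spec t2 N); destruct (Nat.eqb_spec (S t2) N); subst; try lia.
    destruct (Nat.eqb_spec 1 N); lia.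
  - apply Hi; auto; congruence.
Qed.

Ltac bcase := repeat match goal with
 | |- context [Nat.leb ?x ?y] => destruct (Nat.leb_spec x y)
 | |- context [Nat.eqb ?x ?y] => destruct (Nat.eqb_spec x y)
 end.

Lemma iter_tau N k v : (1 <= v <= N)%nat -> (k <= N)%nat ->
  Nat.iter k (tau N) v = if (v + k <=? N)%nat then (v + k)%nat else (v + k - N)%nat.
Proof.
  intros Hv. induction k; intros Hk.
  - simpl. bcase; lia.
  - simpl Nat.iter. rewrite IHk by lia. unfold tau, nxt. bcase; lia.
Qed.

Lemma even_cases t : (exists q, t = 2 * q /\ Nat.even t = true)%nat \/ (exists q, t = 2 * q + 1 /\ Nat.even t = false)%nat.
Proof.
  destruct (Nat.Even_or_Odd t) as [[q Hq]|[q Hq]]; subst.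
  - left. exists q. split; auto. apply Nat.even_even.
  - right. exists q. split; auto. apply Nat.even_odd.
Qed.

Lemma sig_spec N n i : N = (2 * n)%nat -> (2 <= n)%nat -> (1 <= i <= N)%nat ->
  (i = 1 /\ sigma0 N i = 1)%nat \/
  (2 <= i <= n + 1 /\ (exists q, i = 2 * q) /\ sigma0 N i = n + 3 - i)%nat \/
  (3 <= i <= n + 1 /\ (exists q, i = 2 * q + 1) /\ sigma0 N i = N + 3 - i)%nat \/
  (n + 2 <= i /\ (exists q, i = 2 * q) /\ sigma0 N i = i - n)%nat \/
  (n + 2 <= i /\ (exists q, i = 2 * q + 1) /\ sigma0 N i = i)%nat.
Proof.
  intros HN Hn Hi. assert (Hd : (N / 2 = n)%nat) by (subst; rewrite Nat.mul_comm; apply Nat.div_mul; lia).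
  unfold sigma0. rewrite Hd.
  destruct (even_cases i) as [[q [Hq E]]|[q [Hq E]]]; rewrite E; bcase.
  all: try (left; lia).
  all: try (right; left; split; [lia|split; [exists q; lia|lia]]).
  all: try (right; right; left; split; [lia|split; [exists q; lia|lia]]).
  all: try (right; right; right; left; split; [lia|split; [exists q; lia|lia]]).
  all: try (right; right; right; right; split; [lia|split; [exists q; lia|lia]]).
Qed.

Ltac sspec N n i := let H := fresh "Hsg" in let q := fresh "q" in
  destruct (sig_spec N n i ltac:(assumption) ltac:(assumption) ltac:(lia)) as
   [[? H]|[[? [[q ?] H]]|[[? [[q ?] H]]|[[? [[q ?] H]]|[? [[q ?] H]]]]]]; rewrite H in *.

Definition good (n u v : nat) : Prop := (u + (n - 1) <= v <= u + (n + 1) \/ v + (n - 1) <= u <= v + (n + 1))%nat.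

Lemma sig_range N n i : N = (2 * n)%nat -> (2 <= n)%nat -> (1 <= i <= N)%nat -> (1 <= sigma0 N i <= N)%nat.
Proof. intros. sspec N n i; lia. Qed.

Lemma sig_perm N n : N = (2 * n)%nat -> (2 <= n)%nat -> is_perm N (sigma0 N).
Proof.
  intros. split. intros; eapply sig_range; eauto.
  intros i j Hi Hj E. revert E. sspec N n i; sspec N n j; intros; lia.
Qed.

Lemma sig_good N n t : N = (2 * n)%nat -> (2 <= n)%nat -> (1 <= t <= N)%nat ->
  good n (sigma0 N t) (sigma0 N (nxt N t)).
Proof.
  intros. unfold good, nxt. destruct (Nat.eqb_spec t N).
  - subst t. sspec N n N; sspec N n 1%nat; lia.
  - sspec N n t; sspec N n (S t); lia.
Qed.

Lemma sig_miss N n t : N = (2 * n)%nat -> (2 <= n)%nat -> (1 <= t <= N)%nat ->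
  ~ (sigma0 N t = 2 /\ sigma0 N (nxt N t) = n + 1)%nat /\ ~ (sigma0 N t = n + 1 /\ sigma0 N (nxt N t) = 2)%nat.
Proof.
  intros. unfold nxt. destruct (Nat.eqb_spec t N).
  - subst t. sspec N n N; sspec N n 1%nat; lia.
  - sspec N n t; sspec N n (S t); lia.
Qed.

Lemma rot_perm N k : (1 <= N)%nat -> (k <= N)%nat -> is_perm N (fun v => Nat.iter k (tau N) v).
Proof.
  intros. split.
  - intros i Hi. rewrite iter_tau by lia. bcase; lia.
  - intros i j Hi Hj. rewrite !iter_tau by lia. bcase; lia.
Qed.

Lemma sk_perm N n k : N = (2 * n)%nat -> (2 <= n)%nat -> (k <= N)%nat -> is_perm N (sigma_k N k).
Proof.
  intros. unfold sigma_k. apply (comp_perm N (fun v => Nat.iter k (tau N) v) (sigma0 N)).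
  apply rot_perm; lia. eapply sig_perm; eauto.
Qed.

Lemma sk_good N n k t : N = (2 * n)%nat -> (2 <= n)%nat -> (k <= N)%nat -> (1 <= t <= N)%nat ->
  good n (sigma_k N k t) (sigma_k N k (nxt N t)).
Proof.
  intros. unfold sigma_k.
  assert (G := sig_good N n t H H0 H2).
  assert (R1 := sig_range N n t H H0 H2).
  assert (R2 := sig_range N n (nxt N t) H H0 (nxt_range N t ltac:(lia) H2)).
  revert G R1 R2. generalize (sigma0 N t) (sigma0 N (nxt N t)). intros u v G R1 R2.
  rewrite !iter_tau by lia. unfold good in *. bcase; lia.
Qed.

Definition kof N a0 : nat := if (a0 =? 1)%nat then (N - 1)%nat else if (a0 =? 2)%nat then N else (a0 - 2)%nat.

Lemma kof_range N n a0 : N = (2 * n)%nat -> (2 <= n)%nat -> (1 <= a0 <= n + 1)%nat -> (1 <= kof N a0 <= N)%nat.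
Proof. intros. unfold kof. bcase; lia. Qed.

Lemma sk_miss N n a0 t : N = (2 * n)%nat -> (2 <= n)%nat -> (1 <= a0 <= n + 1)%nat -> (1 <= t <= N)%nat ->
  ~ (sigma_k N (kof N a0) t = a0 /\ sigma_k N (kof N a0) (nxt N t) = a0 + n - 1)%nat /\
  ~ (sigma_k N (kof N a0) t = a0 + n - 1 /\ sigma_k N (kof N a0) (nxt N t) = a0)%nat.
Proof.
  intros. unfold sigma_k.
  assert (G := sig_miss N n t H H0 H2).
  assert (R1 := sig_range N n t H H0 H2).
  assert (R2 := sig_range N n (nxt N t) H H0 (nxt_range N t ltac:(lia) H2)).
  assert (K := kof_range N n a0 H H0 H1).
  revert G R1 R2 K. generalize (sigma0 N t) (sigma0 N (nxt N t)). intros u v G R1 R2 K.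
  rewrite !iter_tau by lia. unfold kof in *. bcase; lia.
Qed.

Lemma edge_ne N s t : (2 <= N)%nat -> is_perm N s -> (1 <= t <= N)%nat -> s t <> s (nxt N t).
Proof.
  intros HN [Hr Hi] Ht E. apply Hi in E; auto. apply (nxt_neq N t); auto. apply nxt_range; auto; lia.
Qed.

Lemma memI_true a b x : memI a b x = true <-> (a <= x <= b)%nat.
Proof. unfold memI. rewrite Bool.andb_true_iff, !Nat.leb_le. tauto. Qed.

Lemma memI_false a b x : memI a b x = false <-> ~ (a <= x <= b)%nat.
Proof. rewrite <- memI_true. destruct (memI a b x); intuition congruence. Qed.

Lemma inT_diag N s a b : (2 <= N)%nat -> is_perm N s -> (b <= a)%nat -> inT N s a b = 0.
Proof.
  intros HN Hs Hab. apply sum_bi_all0. intros t Ht.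
  assert (E := edge_ne N s t HN Hs Ht).
  destruct (memI a b (s t)) eqn:E1, (memI a b (s (nxt N t))) eqn:E2; auto.
  apply memI_true in E1, E2. lia.
Qed.

Lemma half_swap N n s : N = (2 * n)%nat -> (2 <= n)%nat -> is_perm N s -> inT N s 1 n = inT N s (n + 1) N.
Proof.
  intros HN Hn Hs.
  assert (E : inT N s 1 n = outT N s (n + 1) N).
  { unfold inT, outT. rewrite !sum1_lsum. apply lsum_ext. intros t Ht. apply in_seq in Ht.
    destruct Hs as [Hr _]. assert (R1 := Hr t ltac:(lia)).
    assert (R2 := Hr _ (nxt_range N t ltac:(lia) ltac:(lia))).
    f_equal. f_equal; unfold memI; bcase; simpl; auto; lia. }
  assert (F := in_out N s (n + 1) N ltac:(lia) Hs ltac:(lia) ltac:(lia) ltac:(lia)).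
  replace (N - (n + 1) + 1)%nat with n in F by lia. assert (INR N = 2 * INR n) by (rewrite HN, mult_INR; simpl; lra).
  lra.
Qed.

Lemma connect N n h a a' : N = (2 * n)%nat -> (2 <= n)%nat -> is_perm N h ->
  (1 <= a)%nat -> (a < a')%nat -> (a' <= n + 1)%nat -> ~ (a = 1 /\ a' = n + 1)%nat ->
  inT N h a (a + n - 1) = 0 -> inT N h a' (a' + n - 1) = 0 -> False.
Proof.
  intros HN Hn Hh H1 H2 H3 H4 I1 I2.
  assert (flip : forall c, (1 <= c <= n + 1)%nat -> inT N h c (c + n - 1) = 0 ->
     forall t, (1 <= t <= N)%nat -> memI c (c + n - 1) (h (nxt N t)) = negb (memI c (c + n - 1) (h t))).
  { intros c Hc I t Ht.
    assert (F := in_out N h c (c + n - 1) ltac:(lia) Hh ltac:(lia) ltac:(lia) ltac:(lia)).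
    replace (c + n - 1 - c + 1)%nat with n in F by lia. assert (INR N = 2 * INR n) by (rewrite HN, mult_INR; simpl; lra).
    assert (O : outT N h c (c + n - 1) = 0) by lra.
    assert (Z1 := sum_bi_zero _ _ I t Ht). assert (Z2 := sum_bi_zero _ _ O t Ht). simpl in Z1, Z2.
    destruct (memI c (c + n - 1) (h t)), (memI c (c + n - 1) (h (nxt N t))); simpl in *; congruence. }
  set (grp := fun v => xorb (memI a (a + n - 1) v) (memI a' (a' + n - 1) v)).
  assert (P : forall m, (1 <= m <= N)%nat -> grp (h m) = grp (h 1%nat)).
  { induction m; intros Hm; [lia|]. destruct (Nat.eq_dec m 0); [subst; reflexivity|].
    rewrite <- IHm by lia. replace (S m) with (nxt N m) by (unfold nxt; bcase; lia).
    unfold grp. rewrite (flip a ltac:(lia) I1 m ltac:(lia)), (flip a' ltac:(lia) I2 m ltac:(lia)). destruct (memI a _ _), (memI a' _ _); reflexivity. }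
  destruct (perm_surj N h a Hh ltac:(lia)) as [t1 [T1 E1]].
  destruct (perm_surj N h a' Hh ltac:(lia)) as [t2 [T2 E2]].
  assert (P1 := P t1 T1). assert (P2 := P t2 T2). rewrite E1 in P1. rewrite E2 in P2.
  rewrite <- P2 in P1. unfold grp in P1.
  replace (memI a (a + n - 1) a) with true in P1 by (symmetry; apply memI_true; lia).
  replace (memI a' (a' + n - 1) a) with false in P1 by (symmetry; apply memI_false; lia).
  replace (memI a (a + n - 1) a') with true in P1 by (symmetry; apply memI_true; lia).
  replace (memI a' (a' + n - 1) a') with true in P1 by (symmetry; apply memI_true; lia).
  discriminate.
Qed.

Lemma main_ineq N n r p k h : N = (2 * n)%nat -> (2 <= n)%nat -> p < 0 ->
  (forall i j : nat, (1 <= i)%nat -> (i < j)%nat -> (j <= N)%nat -> r i < r j) ->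
  (k <= N)%nat -> is_perm N h ->
  (forall a, (1 <= a <= n + 1)%nat -> inT N h a (a + n - 1) = 0 -> inT N (sigma_k N k) a (a + n - 1) = 0) ->
  cost N r p (sigma_k N k) <= cost N r p h.
Proof.
  intros HN Hn hp hm Hk Hh Hcond.
  assert (Hs := sk_perm N n k HN Hn Hk).
  rewrite !cost_decomp by (auto; lia).
  apply lsum_le; intros a Ha; apply lsum_le; intros b Hb. apply in_seq in Ha, Hb.
  set (s := sigma_k N k) in *.
  destruct (le_lt_dec b a) as [Hba|Hab].
  { rewrite !inT_diag by (auto; lia). lra. }
  apply Rmult_le_compat_l. { apply om_nonneg; auto; lia. }
  assert (Rs : forall t, (1 <= t <= N)%nat -> (1 <= s t <= N)%nat /\ (1 <= s (nxt N t) <= N)%nat).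
  { intros t Ht. destruct Hs as [Hr _]. split; apply Hr; auto. apply nxt_range; auto; lia. }
  destruct (le_lt_dec (b - a + 1) (n - 1)) as [L1|L1].
  - replace (inT N s a b) with 0. apply sum_bi_nonneg.
    symmetry. apply sum_bi_all0. intros t Ht. assert (G := sk_good N n k t HN Hn Hk Ht). fold s in G.
    destruct (memI a b (s t)) eqn:E1, (memI a b (s (nxt N t))) eqn:E2; auto.
    apply memI_true in E1, E2. unfold good in G. lia.
  - destruct (le_lt_dec (n + 1) (b - a + 1)) as [L2|L2].
    + assert (O : outT N s a b = 0).
      { apply sum_bi_all0. intros t Ht. assert (G := sk_good N n k t HN Hn Hk Ht). fold s in G.
        destruct (Rs t Ht).
        destruct (memI a b (s t)) eqn:E1, (memI a b (s (nxt N t))) eqn:E2; auto.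
        apply memI_false in E1, E2. unfold good in G. simpl. exfalso. lia. }
      assert (F1 := in_out N s a b ltac:(lia) Hs ltac:(lia) ltac:(lia) ltac:(lia)).
      assert (F2 := in_out N h a b ltac:(lia) Hh ltac:(lia) ltac:(lia) ltac:(lia)).
      assert (0 <= outT N h a b) by apply sum_bi_nonneg. lra.
    + assert (Eb : b = (a + n - 1)%nat) by lia.
      assert (C := sum_bi_cases N (fun t => memI a b (h t) && memI a b (h (nxt N t)))).
      change (inT N h a b = 0 \/ 1 <= inT N h a b) in C. destruct C as [C|C].
      * rewrite C. rewrite Eb in C |- *. rewrite Hcond; [lra|lia|exact C].
      * assert (inT N s a b <= 1); [|lra].
        apply pair_le1; auto; try lia. intros t Ht E.
        assert (G := sk_good N n k t HN Hn Hk Ht). fold s in G.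
        apply Bool.andb_true_iff in E. destruct E as [E1 E2]. apply memI_true in E1, E2.
        unfold good in G. lia.
Qed.

Lemma argmin (f : nat -> R) N : (1 <= N)%nat -> exists k, (1 <= k <= N)%nat /\ forall j, (1 <= j <= N)%nat -> f k <= f j.
Proof.
  induction N; intros H; [lia|]. destruct (Nat.eq_dec N 0).
  - subst. exists 1%nat. split; [lia|]. intros j Hj. replace j with 1%nat by lia. lra.
  - destruct (IHN ltac:(lia)) as [k [Hk Hm]]. destruct (Rle_lt_dec (f k) (f (S N))).
    + exists k. split; [lia|]. intros j Hj. destruct (Nat.eq_dec j (S N)); [subst; auto|]. apply Hm; lia.
    + exists (S N). split; [lia|]. intros j Hj. destruct (Nat.eq_dec j (S N)); [subst; lra|].
      specialize (Hm j ltac:(lia)). lra.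
Qed.

Lemma s_miss_in N n a0 : N = (2 * n)%nat -> (2 <= n)%nat -> (1 <= a0 <= n + 1)%nat ->
  inT N (sigma_k N (kof N a0)) a0 (a0 + n - 1) = 0.
Proof.
  intros HN Hn Ha. apply sum_bi_all0. intros t Ht.
  assert (K := kof_range N n a0 HN Hn Ha).
  assert (G := sk_good N n (kof N a0) t HN Hn ltac:(lia) Ht).
  assert (M := sk_miss N n a0 t HN Hn Ha Ht).
  destruct (memI a0 _ (sigma_k N (kof N a0) t)) eqn:E1, (memI a0 _ (sigma_k N (kof N a0) (nxt N t))) eqn:E2; auto.
  apply memI_true in E1, E2. unfold good in G. exfalso. lia.
Qed.

Theorem proposition4 (N : nat) (p : R) (r : nat -> R)
  (hN4 : (4 <= N)%nat) (hNeven : Nat.Even N) (hp : p < 0)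
  (hr0 : 0 <= r 1%nat) (hr1 : r N <= 1)
  (hmono : forall i j : nat, (1 <= i)%nat -> (i < j)%nat -> (j <= N)%nat -> r i < r j) :
  exists k : nat, (1 <= k <= N)%nat /\
    forall h : nat -> nat, is_perm N h -> cost N r p (sigma_k N k) <= cost N r p h.
Proof.
  destruct hNeven as [n HN]. assert (Hn : (2 <= n)%nat) by lia.
  assert (per_h : forall h, is_perm N h -> exists k, (1 <= k <= N)%nat /\ cost N r p (sigma_k N k) <= cost N r p h).
  { intros h Hh.
    destruct (classic (exists a0, (1 <= a0 <= n + 1)%nat /\ inT N h a0 (a0 + n - 1) = 0)) as [[a0 [Ha0 I0]]|Hno].
    - exists (kof N a0). assert (K := kof_range N n a0 HN Hn Ha0). split; auto.
      apply (main_ineq N n); auto; try lia. intros a Ha Ia.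
      assert (Z := s_miss_in N n a0 HN Hn Ha0).
      destruct (Nat.lt_total a a0) as [lt|[eq|gt]].
      + destruct (classic (a = 1 /\ a0 = n + 1)%nat) as [[E1 E2]|NE].
        * subst a a0. replace (1 + n - 1)%nat with n by lia. rewrite half_swap with (n := n) by (auto; apply sk_perm with (n := n); lia).
          replace (n + 1 + n - 1)%nat with N in Z by lia. exact Z.
        * exfalso. apply (connect N n h a a0); auto; lia.
      + subst; auto.
      + destruct (classic (a0 = 1 /\ a = n + 1)%nat) as [[E1 E2]|NE].
        * subst a a0. replace (n + 1 + n - 1)%nat with N by lia. rewrite <- half_swap with (n := n) by (auto; apply sk_perm with (n := n); lia).
          replace (1 + n - 1)%nat with n in Z by lia. exact Z.
        * exfalso. apply (connect N n h a0 a); auto; lia.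
    - exists N. split; [lia|]. apply (main_ineq N n); auto; try lia. intros a Ha Ia. exfalso. apply Hno. eauto. }
  destruct (argmin (fun k => cost N r p (sigma_k N k)) N ltac:(lia)) as [k [Hk Hm]].
  exists k. split; auto. intros h Hh. destruct (per_h h Hh) as [k' [Hk' C]].
  specialize (Hm k' Hk'). simpl in Hm. lra.
Qed.
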